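(* Let $G=DS(L,P^{core},R)$ be a double spider and let $P$ be a path of length one belonging to $L\cup R$. Suppose at least one of the following holds: (1) $P\in R$, $\deg_G(v_l)\ge\deg_G(v_r)>3$, and the double spider $DS(L,P^{core},R\setminus\{P\})$ (i.e. $G$ with the edge of $P$ and its leaf removed) is strongly antimagic; (2) $P\in L$, $\deg_G(v_l)>\deg_G(v_r)\ge 3$, and the double spider $DS(L\setminus\{P\},P^{core},R)$ has a strongly antimagic labeling $f$ with $\varphi_f(v_l)>\varphi_f(v_r)$. Then $G$ is strongly antimagic.
   Context: For a graph $G=(V,E)$ and a bijection $f:E\to\{1,\dots,|E|\}$, $\varphi_f(u)=\sum_{e\ni u}f(e)$; $f$ is strongly antimagic if the $\varphi_f(u)$ are pairwise distinct over $V$ and $\deg(u)<\deg(v)$ implies $\varphi_f(u)<\varphi_f(v)$; a graph is strongly antimagic if it has such a labeling. A double spider is a tree with exactly two vertices of degree at least $3$, denoted $v_l$ and $v_r$, with the convention $\deg(v_l)\ge\deg(v_r)$. Its edge set is decomposed as $P^{core}\cup L\cup R$, where $P^{core}$ is the unique $v_l$–$v_r$ path, $L$ is the set of maximal paths having $v_l$ as an endpoint and edge-disjoint from $P^{core}$ (each ending at a leaf), and $R$ is the analogous set of paths at $v_r$. The double spider is written $DS(L,P^{core},R)$; the length of a path is its number of edges. *)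

(* Defs.v *)
(* A graph is given by a vertex set S : {set V} inside a
   finType V and an adjacency relation e (assumed symmetric, irreflexive);
   the graph is the one induced on S. Edges are 2-element sets {u,v}. *)
From mathcomp Require Import all_boot.
Set Implicit Arguments. Unset Strict Implicit. Unset Printing Implicit Defensive.

Section Graphs.
Variable V : finType.

Definition adjS (S : {set V}) (e : rel V) : rel V :=
  [rel a b | [&& a \in S, b \in S & e a b]].

Definition edges (S : {set V}) (e : rel V) : {set {set V}} :=
  [set [set x; y] | x in S, y in S & e x y].

Definition deg (S : {set V}) (e : rel V) (v : V) : nat :=
  #|[set u in S | e v u]|.

Definition connectedG (S : {set V}) (e : rel V) : Prop :=
  forall x y, x \in S -> y \in S -> connect (adjS S e) x y.

Definition acyclicG (S : {set V}) (e : rel V) : Prop :=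
  ~ exists c : seq V, (3 <= size c) && ucycleb (adjS S e) c.

Definition is_tree (S : {set V}) (e : rel V) : Prop :=
  S != set0 /\ connectedG S e /\ acyclicG S e.

Definition double_spider (S : {set V}) (e : rel V) (vl vr : V) : Prop :=
  [/\ is_tree S e, vl != vr,
      [set v in S | 3 <= deg S e v] = [set vl; vr]
    & deg S e vr <= deg S e vl].

Definition edge_bij (S : {set V}) (e : rel V) (f : {set V} -> nat) : Prop :=
  {in edges S e &, injective f} /\
  (forall x, x \in edges S e -> 1 <= f x <= #|edges S e|).

Definition phi (S : {set V}) (e : rel V) (f : {set V} -> nat) (v : V) : nat :=
  \sum_(u in S | e v u) f [set v; u].

Definition strongly_antimagic_labeling (S : {set V}) (e : rel V)
    (f : {set V} -> nat) : Prop :=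
  [/\ edge_bij S e f,
      {in S &, injective (phi S e f)}
    & forall u v, u \in S -> v \in S -> deg S e u < deg S e v ->
        phi S e f u < phi S e f v].

Definition strongly_antimagic (S : {set V}) (e : rel V) : Prop :=
  exists f, strongly_antimagic_labeling S e f.

End Graphs.

(* Main.v *)
Require Import Defs.
From mathcomp Require Import all_boot zify.
Set Implicit Arguments. Unset Strict Implicit. Unset Printing Implicit Defensive.

Lemma edgesP (V : finType) (S : {set V}) (e : rel V) E :
  reflect (exists x y, [/\ x \in S, y \in S, e x y & E = [set x; y]]) (E \in edges S e).
Proof.
apply: (iffP imset2P).
  by case=> x y xS; rewrite inE => /andP[yS exy] ->; exists x, y.
case=> x [y [xS yS exy ->]]; apply: (Imset2spec xS) => //; by rewrite inE yS.
Qed.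

Lemma deg_split (V : finType) (S : {set V}) (e : rel V) w y :
  w \in S -> deg S e y = e y w + deg (S :\ w) e y.
Proof.
move=> hw; rewrite /deg (cardsD1 w) [w \in _]inE hw /=.
have -> : [set u in S | e y u] :\ w = [set u in S :\ w | e y u].
  by apply/setP=> u; rewrite !inE andbA.
by [].
Qed.

Lemma sum_split (V : finType) (S : {set V}) (e : rel V) w y (F : V -> nat) :
  w \in S -> \sum_(u in S | e y u) F u =
    (if e y w then F w else 0) + \sum_(u in S :\ w | e y u) F u.
Proof.
move=> hw; rewrite (bigID (pred1 w)) /=; congr (_ + _).
  case: ifP => h.
    rewrite (eq_bigl (pred1 w)) ?big_pred1_eq // => u /=.
    by case: (u =P w) => [->|]; rewrite ?hw ?h ?andbF.
  rewrite big_pred0 // => u /=; apply/negbTE; apply/andP => -[/andP[_ h1] /eqP h2].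
  by rewrite h2 h in h1.
by apply: eq_bigl => u; rewrite !inE; case: (u == w); rewrite /= ?andbF ?andbT.
Qed.

Lemma phi_ge_deg (V : finType) (S : {set V}) (e : rel V) f y :
  edge_bij S e f -> y \in S -> deg S e y <= phi S e f y.
Proof.
case=> _ hr yS; rewrite /deg /phi -sum1_card.
rewrite (eq_bigl (fun u => (u \in S) && e y u)); last by move=> u; rewrite inE.
apply: leq_sum => u /andP[uS eyu].
have hE : [set y; u] \in edges S e by apply/edgesP; exists y, u.
by case/andP: (hr _ hE).
Qed.

Lemma phi_deg0 (V : finType) (S : {set V}) (e : rel V) f y :
  deg S e y = 0 -> phi S e f y = 0.
Proof.
rewrite /deg => /eqP; rewrite cards_eq0 => /eqP h0.
rewrite /phi big_pred0 // => u; have := in_set0 u; rewrite -h0 inE.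
by move=> ->.
Qed.

Lemma nbr_w (V : finType) (S : {set V}) (e : rel V) w v y :
  symmetric e -> v \in S -> e v w -> deg S e w = 1 -> y \in S -> e y w -> y = v.
Proof.
move=> es vS evw /eqP/cards1P[z hz] yS eyw.
have : v \in [set u in S | e w u] by rewrite inE vS es.
have : y \in [set u in S | e w u] by rewrite inE yS es.
by rewrite hz !inE => /eqP -> /eqP ->.
Qed.

Lemma edgesS (V : finType) (S : {set V}) (e : rel V) w v :
  symmetric e -> v \in S -> w \in S -> v != w -> e v w -> deg S e w = 1 ->
  edges S e = [set v; w] |: edges (S :\ w) e.
Proof.
move=> es vS wS vw evw dw; apply/setP=> E; rewrite !inE.
apply/idP/idP.
  case/edgesP=> x [y [xS yS exy ->]].
  case: (x =P w) => [xw|/eqP xw].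
    subst x; have := nbr_w es vS evw dw yS; rewrite es => /(_ exy) ->.
    by rewrite setUC eqxx.
  case: (y =P w) => [yw|/eqP yw].
    subst y; by rewrite (nbr_w es vS evw dw xS exy) eqxx.
  by apply/orP; right; apply/edgesP; exists x, y; rewrite !inE xw yw xS yS.
case/orP=> [/eqP ->|/edgesP[x [y [xS yS exy ->]]]]; apply/edgesP.
  by exists v, w.
by move: xS yS; rewrite !inE => /andP[_ ?] /andP[_ ?]; exists x, y.
Qed.

Lemma vw_notin (V : finType) (S : {set V}) (e : rel V) w v E :
  E \in edges (S :\ w) e -> E != [set v; w].
Proof.
case/edgesP=> x [y [xS yS _ ->]]; apply/negP => /eqP h.
have : w \in [set x; y] by rewrite h !inE eqxx orbT.
by rewrite !inE => /orP[/eqP hx|/eqP hy]; [move: xS; rewrite -hx | move: yS; rewrite -hy]; rewrite !inE eqxx.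
Qed.

Lemma core (V : finType) (S : {set V}) (e : rel V) w v f' :
  symmetric e -> irreflexive e -> v \in S -> w \in S -> e v w ->
  deg S e w = 1 -> 3 <= deg S e v ->
  strongly_antimagic_labeling (S :\ w) e f' ->
  (forall u x, u \in S :\ w -> x \in S :\ w -> deg S e u < deg S e x ->
     phi (S :\ w) e f' u < phi (S :\ w) e f' x) ->
  strongly_antimagic S e.
Proof.
move=> es ei vS wS evw dw dv [[f'inj f'r] sai _] mono.
have vw : v != w by apply/eqP=> h; move: evw; rewrite h ei.
pose f E := if E == [set v; w] then 1 else (f' E).+1.
have hE := edgesS es vS wS vw evw dw.
have ebij : edge_bij S e f.
  split.
    move=> E1 E2; rewrite hE !inE /f.
    case/orP=> [/eqP->|h1]; case/orP=> [/eqP->|h2] //.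
    - rewrite eqxx (negbTE (vw_notin v h2)) => -[] h.
      by have := f'r _ h2; rewrite -h.
    - rewrite eqxx (negbTE (vw_notin v h1)) => -[] h.
      by have := f'r _ h1; rewrite h.
    rewrite (negbTE (vw_notin v h1)) (negbTE (vw_notin v h2)).
    by move=> [] /(f'inj _ _ h1 h2).
  move=> E; rewrite hE cardsU1 (negbTE (introN idP (fun h => negP (vw_notin v h) (eqxx _)))).
  rewrite !inE /f; case/orP=> [/eqP->|h1]; first by rewrite eqxx.
  by rewrite (negbTE (vw_notin v h1)); have := f'r _ h1; lia.
have eyw y : y \in S -> e y w = (y == v).
  move=> yS; apply/idP/eqP => [h|->//]; exact: nbr_w es vS evw dw yS h.
have phiS y : y \in S :\ w -> phi S e f y = phi (S :\ w) e f' y + deg S e y.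
  move=> yS; have /andP[yw yS'] : (y != w) && (y \in S) by rewrite -in_setD1.
  rewrite /phi (sum_split _ _ _ wS) (deg_split _ _ wS) /deg -sum1_card.
  have -> : \sum_(u in S :\ w | e y u) f [set y; u] =
            \sum_(u in S :\ w | e y u) (f' [set y; u] + 1).
    apply: eq_bigr => u /andP[uS _]; rewrite /f.
    have : [set y; u] != [set v; w].
      apply/negP=> /eqP h; have : w \in [set y; u] by rewrite h !inE eqxx orbT.
      rewrite !inE => /orP[/eqP hy|/eqP hu]; first by move: yw; rewrite hy eqxx.
      by move: uS; rewrite -hu !inE eqxx.
    by move/negbTE => ->; rewrite addn1.
  rewrite big_split /= (eyw _ yS').
  have -> : \sum_(i in [set u in S :\ w | e y u]) 1 = \sum_(i in S :\ w | e y i) 1.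
    by apply: eq_bigl => u; rewrite inE.
  case: (y =P v) => [->|_]; last by rewrite /=; lia.
  rewrite /f eqxx /=; lia.
have phiw : phi S e f w = 1.
  rewrite /phi (eq_bigl (pred1 v)) ?big_pred1_eq.
    by rewrite /f setUC eqxx.
  move=> u /=; apply/idP/eqP=> [/andP[uS ewu]|->]; last by rewrite vS es.
  by apply: (nbr_w es vS evw dw uS); rewrite es.
have inSw y : y \in S -> y != w -> y \in S :\ w by move=> ? ?; rewrite in_setD1; apply/andP.
have monoS : forall u x, u \in S -> x \in S -> deg S e u < deg S e x ->
    phi S e f u < phi S e f x.
  move=> u x uS xS hd.
  case: (u =P w) => [uw|/eqP uw].
    subst u; have xw : x != w by apply/eqP=> h; move: hd; rewrite h ltnn.
    by rewrite phiw phiS ?inSw //; move: hd; rewrite dw; lia.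
  case: (x =P w) => [xw|/eqP xw].
    subst x; move: hd; rewrite dw ltnS leqn0 => /eqP hd0.
    rewrite phiw phiS ?inSw // hd0 addn0.
    have : deg (S :\ w) e u = 0 by move: hd0; rewrite (deg_split _ _ wS); lia.
    by move/(phi_deg0 f') ->.
  rewrite !phiS ?inSw //; have := mono u x (inSw _ uS uw) (inSw _ xS xw) hd; lia.
exists f; split; [exact: ebij| |move=> ? ? ? ? ?; exact: monoS].
move=> u x uS xS hphi.
case: (ltngtP (deg S e u) (deg S e x)) => hd.
- by move: (monoS _ _ uS xS hd); rewrite hphi ltnn.
- by move: (monoS _ _ xS uS hd); rewrite hphi ltnn.
have key y : y \in S -> y != w -> deg S e y = 1 -> phi S e f y != 1.
  move=> yS yw dy; rewrite phiS ?inSw // dy.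
  have : deg (S :\ w) e y = 1.
    move: (dy); rewrite (deg_split _ _ wS) eyw //; case: (y =P v) => [yv|] /=; last by lia.
    by move: dv; rewrite -yv dy.
  move=> dy'; have := phi_ge_deg (conj f'inj f'r) (inSw _ yS yw); rewrite dy'; lia.
case: (u =P w) => [uw|/eqP uw]; case: (x =P w) => [xw|/eqP xw].
- by rewrite uw xw.
- by subst u; move: (key _ xS xw); rewrite -hd dw -hphi phiw eqxx => /(_ erefl).
- by subst x; move: (key _ uS uw); rewrite hd dw hphi phiw eqxx => /(_ erefl).
move: hphi; rewrite !phiS ?inSw // hd => /eqP; rewrite eqn_add2r => /eqP.
exact: (sai _ _ (inSw _ uS uw) (inSw _ xS xw)).
Qed.

Theorem lemma3 (V : finType) (e : rel V) (S : {set V}) (vl vr w : V)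
  (e_sym : symmetric e) (e_irr : irreflexive e)
  (hDS : double_spider S e vl vr)
  (hw : w \in S) (hleaf : deg S e w = 1) :
  (* (1): P = vr--w is a length-one path of R *)
  ((e vr w /\ deg S e vl >= deg S e vr /\ deg S e vr > 3 /\
     strongly_antimagic (S :\ w) e)
   \/
  (* (2): P = vl--w is a length-one path of L *)
   (e vl w /\ deg S e vl > deg S e vr /\ deg S e vr >= 3 /\
     exists f, strongly_antimagic_labeling (S :\ w) e f /\
               phi (S :\ w) e f vl > phi (S :\ w) e f vr)) ->
  strongly_antimagic S e.
Proof.
case: hDS => _ vlr hset hdeg.
have vlS : vl \in S.
  have : vl \in [set v in S | 3 <= deg S e v] by rewrite hset !inE eqxx.
  by rewrite inE => /andP[].
have vrS : vr \in S.
  have : vr \in [set v in S | 3 <= deg S e v] by rewrite hset !inE eqxx orbT.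
  by rewrite inE => /andP[].
have small y : y \in S -> y != vl -> y != vr -> deg S e y <= 2.
  move=> yS h1 h2; rewrite leqNgt; apply/negP => h3.
  have : y \in [set v in S | 3 <= deg S e v] by rewrite inE yS.
  by rewrite hset !inE (negbTE h1) (negbTE h2).
have dsplit v y : v \in S -> e v w -> y \in S -> deg S e y = (y == v) + deg (S :\ w) e y.
  move=> vS evw yS; rewrite (deg_split _ _ hw).
  have -> // : e y w = (y == v).
  apply/idP/eqP => [h|->//]; exact: (nbr_w e_sym vS evw hleaf yS h).
have inSw y : y \in S :\ w -> y \in S by rewrite in_setD1 => /andP[].
case=> [[evw [h1 [h2 [f' hf']]]]|[evw [h1 [h2 [f' [hf' hphi]]]]]].
  apply: (core e_sym e_irr vrS hw evw hleaf _ hf'); first by lia.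
  case: hf' => _ _ mono' u x uS xS hd; apply: mono' => //.
  have du := dsplit _ _ vrS evw (inSw _ uS); have dx := dsplit _ _ vrS evw (inSw _ xS).
  case: (x =P vr) => [xv|/eqP xv] in dx *.
    subst x; case: (u =P vl) => [uv|/eqP uv].
      by subst u; move: hd; rewrite ltnNge h1.
    have hu : u != vr by apply/eqP => h; move: hd; rewrite h ltnn.
    have := small _ (inSw _ uS) uv hu; move: du; rewrite (negbTE hu); lia.
  move: du dx; case: (u == vr); rewrite /=; lia.
apply: (core e_sym e_irr vlS hw evw hleaf _ hf'); first by lia.
case: hf' => _ _ mono' u x uS xS hd.
have du := dsplit _ _ vlS evw (inSw _ uS); have dx := dsplit _ _ vlS evw (inSw _ xS).
case: (x =P vl) => [xv|/eqP xv] in dx *.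
  subst x; case: (u =P vr) => [uv|/eqP uv]; first by subst u.
  have hu : u != vl by apply/eqP => h; move: hd; rewrite h ltnn.
  apply: mono' => //; have := small _ (inSw _ uS) hu uv; move: du; rewrite (negbTE hu).
  lia.
apply: mono' => //; move: du dx; case: (u == vl); rewrite /=; lia.
Qed.
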